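(* In the setting of the context, fix $r\in\{0,\dots,d\}$ and assume that in $\Delta$ vertex $r$ is adjacent to exactly one other vertex. Then $a^*_r\ne\theta^*_0$.
   Context: Let $\mathbb F$ be a field, $d\ge1$ an integer, $V$ a vector space over $\mathbb F$ of dimension $d+1$, $\mathcal A=\mathrm{End}(V)$ with identity $I$. Let $E^*_0,\dots,E^*_d\in\mathcal A$ satisfy $E^*_iE^*_j=\delta_{i,j}E^*_i$ and $\mathrm{rank}(E^*_i)=1$ for $0\le i,j\le d$. Let $A\in\mathcal A$ satisfy $E^*_iAE^*_j=0$ if $|i-j|>1$ and $E^*_iAE^*_j\neq0$ if $|i-j|=1$. Assume $A$ has $d+1$ mutually distinct eigenvalues $\theta_0,\dots,\theta_d$ in $\mathbb F$, and let $E_i=\prod_{j\ne i}\frac{A-\theta_jI}{\theta_i-\theta_j}$ be the primitive idempotent of $A$ for $\theta_i$. Let $\theta^*_0,\dots,\theta^*_d\in\mathbb F$ and $A^*=\sum_{i=0}^d\theta^*_iE^*_i$. Define $a^*_i=\mathrm{tr}(E_iA^* )$. Let $\Delta$ be the graph on vertex set $\{0,\dots,d\}$ in which $i,j$ are adjacent iff $i\ne j$ and $E_iA^*E_j\ne0$. *)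

(* Defs.v *)
(* V = F^(d+1) realized as square matrices 'M[F]_(d.+1);
   indices 0..d are 'I_d.+1. *)
From HB Require Import structures.
From mathcomp Require Import all_boot all_order all_algebra.
Set Implicit Arguments. Unset Strict Implicit. Unset Printing Implicit Defensive.
Import Order.TTheory GRing.Theory.
Local Open Scope ring_scope.

Definition prim_idem (F : fieldType) (d : nat) (A : 'M[F]_d.+1)
  (theta : 'I_d.+1 -> F) (i : 'I_d.+1) : 'M[F]_d.+1 :=
  \prod_(j < d.+1 | j != i) ((theta i - theta j)^-1 *: (A - (theta j)%:M)).

Definition dual_op (F : fieldType) (d : nat) (Es : 'I_d.+1 -> 'M[F]_d.+1)
  (thetas : 'I_d.+1 -> F) : 'M[F]_d.+1 :=
  \sum_(i < d.+1) thetas i *: Es i.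

Definition Delta_adj (F : fieldType) (d : nat) (E : 'I_d.+1 -> 'M[F]_d.+1)
  (Astar : 'M[F]_d.+1) (i j : 'I_d.+1) : bool :=
  (i != j) && (E i *m Astar *m E j != 0).

(* Main.v *)
Require Import Defs.
From HB Require Import structures.
From mathcomp Require Import all_boot all_order all_algebra.
From mathcomp Require Import zify.
Import Order.TTheory GRing.Theory.
Local Open Scope ring_scope.

Lemma rank1_factor (F : fieldType) m n p (B : 'M[F]_(m, n)) (C : 'M[F]_(n, p)) :
  (\rank B <= 1)%N -> B *m C != 0 -> exists Y : 'M[F]_(p, n), B = B *m C *m Y.
Proof.
move=> hB hBC.
have r1 : \rank (B *m C) = \rank B.
  have h1 := mxrankM_maxl B C.
  have h2 : (0 < \rank (B *m C))%N by rewrite lt0n mxrank_eq0.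
  lia.
have sub : (C^T *m B^T <= B^T)%MS := submxMl _ _.
have := mxrank_leqif_sup sub.
rewrite -trmx_mul !mxrank_tr r1 => [[_ ]].
rewrite eqxx => /esym hs.
move: hs; rewrite trmx_mul => /submxP [D hD].
exists D^T.
by rewrite -{1}[B]trmxK hD !trmx_mul !trmxK.
Qed.

Lemma rank_le1_decomp (F : fieldType) m n (E : 'M[F]_(m, n)) :
  (\rank E <= 1)%N -> exists (D : 'M[F]_(m, 1)) (w : 'rV[F]_n), E = D *m w.
Proof.
move=> hE.
have [->|nz] := eqVneq E 0.
  by exists 0, 0; rewrite mul0mx.
have [i hi] : exists i, row i E != 0.
  apply/existsP; apply: contraR nz => /existsPn h.
  apply/eqP/row_matrixP => i; rewrite row0; exact/eqP/negPn/h.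
have sub : (row i E <= E)%MS := row_sub _ _.
have [_ eq] := mxrank_leqif_sup sub.
have : (E <= row i E)%MS.
  by rewrite -eq rank_rV hi eq_sym eqn_leq hE lt0n mxrank_eq0.
move=> /submxP [D hD].
by exists D, (row i E).
Qed.

Lemma trace_rank1 (F : fieldType) n (E X : 'M[F]_n) :
  (\rank E <= 1)%N -> E *m X *m E = \tr (E *m X) *: E.
Proof.
move=> /rank_le1_decomp [D [w ->]].
have -> : \tr (D *m w *m X) = (w *m X *m D) 0 0.
  by rewrite -mulmxA mxtrace_mulC trace_mx11.
have -> : D *m w *m X *m (D *m w) = D *m (w *m X *m D) *m w by rewrite !mulmxA.
by rewrite {1}[w *m X *m D]mx11_scalar mul_mx_scalar scalemxAl.
Qed.

Lemma basis_eq (F : fieldType) n (u : 'I_n -> 'rV[F]_n) (P : 'I_n -> 'M[F]_n) :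
  (forall i, u i != 0) -> (forall i j, u i *m P j = (i == j)%:R *: u i) ->
  forall X Y : 'M[F]_n, (forall i, u i *m X = u i *m Y) -> X = Y.
Proof.
move=> hu hP X Y hXY.
pose U : 'M[F]_n := \matrix_i u i.
have rU : forall i, row i U = u i by move=> i; rewrite rowK.
have kill : forall x : 'rV[F]_n, x *m U = 0 -> x = 0.
  move=> x hx; apply/rowP => j; rewrite mxE.
  have : x *m U *m P j = x 0 j *: u j.
    rewrite (mulmx_sum_row x U) mulmx_suml (bigD1 j) //= big1 => [|i hij].
      by rewrite addr0 rU -scalemxAl hP eqxx scale1r.
    by rewrite rU -scalemxAl hP (negbTE hij) scale0r scaler0.
  rewrite hx mul0mx => /esym/eqP; rewrite scaler_eq0 (negbTE (hu j)) orbF.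
  by move/eqP.
have fU : row_free U.
  rewrite -kermx_eq0; apply/eqP/row_matrixP => i; rewrite row0.
  apply: kill; by rewrite -row_mul mulmx_ker row0.
have uU : U \in unitmx by rewrite -row_free_unit.
have hUXY : U *m X = U *m Y.
  by apply/row_matrixP => i; rewrite !row_mul rU hXY.
by rewrite -(mulKmx uU X) hUXY mulKmx.
Qed.

Lemma prod_eig (F : fieldType) n (A : 'M[F]_n.+1) (v : 'rV[F]_n.+1) t
  (I : finType) (Pr : pred I) (c th : I -> F) :
  v *m A = t *: v ->
  v *m (\prod_(l | Pr l) (c l *: (A - (th l)%:M))) =
  (\prod_(l | Pr l) (c l * (t - th l))) *: v.
Proof.
move=> hv.
apply: (big_rec2 (fun x (M : 'M[F]_n.+1) => v *m M = x *: v)).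
  by rewrite mulmx1 scale1r.
move=> i y1 y2 _ IH.
have -> : c i *: (A - (th i)%:M) * y2 = c i *: (A - (th i)%:M) *m y2 by [].
rewrite mulmxA -scalemxAr mulmxBr hv mul_mx_scalar -scalerBl scalerA.
by rewrite -scalemxAl IH scalerA.
Qed.

Lemma sum_idem (F : fieldType) d (Es : 'I_d.+1 -> 'M[F]_d.+1)
  (hEs_mul : forall i j : 'I_d.+1, Es i *m Es j = if i == j then Es i else 0)
  (hEs_rank : forall i : 'I_d.+1, \rank (Es i) = 1%N) :
  \sum_i Es i = 1%:M.
Proof.
pose k i := odflt ord0 [pick k | row k (Es i) != 0].
have hk : forall i, row (k i) (Es i) != 0.
  move=> i; rewrite /k; case: pickP => //= h.
  have : Es i != 0 by rewrite -mxrank_eq0 hEs_rank.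
  case/negP; apply/eqP/row_matrixP => j; rewrite row0; exact/eqP/negbFE/h.
apply: (@basis_eq _ _ (fun i => row (k i) (Es i)) Es) => //.
  move=> i j; rewrite -row_mul hEs_mul; case: eqP => [->|_].
    by rewrite scale1r.
  by rewrite row0 scale0r.
move=> i; rewrite mulmx1 mulmx_sumr (bigD1 i) //= big1 => [|j hj].
  by rewrite -row_mul hEs_mul eqxx addr0.
by rewrite -row_mul hEs_mul eq_sym (negbTE hj) row0.
Qed.

Lemma cyclic0 (F : fieldType) d (Es : 'I_d.+1 -> 'M[F]_d.+1) (A : 'M[F]_d.+1)
  (hEs_mul : forall i j : 'I_d.+1, Es i *m Es j = if i == j then Es i else 0)
  (hEs_rank : forall i : 'I_d.+1, \rank (Es i) = 1%N)
  (hA_far : forall i j : 'I_d.+1,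
      ((i.+1 < j) || (j.+1 < i))%N -> Es i *m A *m Es j = 0)
  (hA_near : forall i j : 'I_d.+1,
      ((i.+1 == j) || (j.+1 == i))%N -> Es i *m A *m Es j != 0)
  m (M : 'M[F]_(m, d.+1)) :
  (forall k, (k <= d)%N -> M *m A ^+ k *m Es ord0 = 0) -> M = 0.
Proof.
move=> hM.
have hS := @sum_idem _ _ _ hEs_mul hEs_rank.
have expand : forall p q (X : 'M[F]_(p, d.+1)) (Y : 'M[F]_(d.+1, q)),
    X *m Y = \sum_l (X *m Es l) *m (Es l *m Y).
  move=> p q X Y; rewrite -{1}(mulmx1 X) -hS mulmx_sumr mulmx_suml.
  apply: eq_bigr => l _.
  by rewrite mulmxA -(mulmxA X (Es l) (Es l)) hEs_mul eqxx.
have F1 : forall k (i j : 'I_d.+1), ((i + k < j) || (j + k < i))%N ->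
    Es i *m A ^+ k *m Es j = 0.
  elim=> [|k IH] i j hij.
    rewrite expr0 mulmx1 hEs_mul; case: eqP => // eij.
    by move: hij; rewrite eij addn0 ltnn.
  rewrite exprS -[A * _]/(A *m A ^+ k) mulmxA -mulmxA expand big1 // => l _.
  have [hf|hf] : ((i.+1 < l) || (l.+1 < i))%N \/ ((l + k < j) || (j + k < l))%N.
    move: hij; case: (ltngtP i l) => //; lia.
  - by rewrite hA_far // mul0mx.
  - by rewrite (mulmxA (Es l)) IH // mulmx0.
have F2 : forall k, (k.+1 <= d)%N ->
    Es (inord k.+1) *m A ^+ k.+1 *m Es ord0 =
    (Es (inord k.+1) *m A *m Es (inord k)) *m (Es (inord k) *m A ^+ k *m Es ord0).
  move=> k hk.
  rewrite exprS -[A * _]/(A *m A ^+ k) mulmxA -mulmxA expand (bigD1 (inord k)) //=.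
  rewrite big1 ?addr0; first by rewrite !mulmxA.
  move=> l hl.
  have hkv : (nat_of_ord (inord k : 'I_d.+1) = k) by rewrite inordK //; lia.
  have hk1v : (nat_of_ord (inord k.+1 : 'I_d.+1) = k.+1) by rewrite inordK //; lia.
  have hlk : nat_of_ord l != k by apply: contra hl => /eqP hl; apply/eqP/val_inj; rewrite /= hkv.
  have [hf|hf] : ((nat_of_ord (inord k.+1 : 'I_d.+1)).+1 < l \/ (l.+1 < nat_of_ord (inord k.+1 : 'I_d.+1)))%N
      \/ ((l + k < (ord0 : 'I_d.+1)) || ((ord0 : 'I_d.+1) + k < l))%N.
    rewrite hk1v /=; move: hlk; lia.
  - by rewrite hA_far ?mul0mx //; case: hf => ->; rewrite ?orbT.
  - by rewrite (mulmxA (Es l)) F1 // mulmx0.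
have F3 : forall k, (k <= d)%N -> Es (inord k) *m A ^+ k *m Es ord0 != 0.
  elim=> [|k IH] hk.
    have -> : inord 0 = ord0 :> 'I_d.+1 by apply: val_inj; rewrite /= inordK.
    by rewrite expr0 mulmx1 hEs_mul eqxx -mxrank_eq0 hEs_rank.
  rewrite F2 //.
  set X := Es (inord k.+1) *m A *m Es (inord k).
  set Q := Es (inord k) *m A ^+ k *m Es ord0.
  have hQ : Q != 0 by apply: IH; lia.
  have hEQ : Es (inord k) *m Q = Q by rewrite /Q !mulmxA hEs_mul eqxx.
  have hBC : Es (inord k) *m Q != 0 by rewrite hEQ.
  have [Y hY] := @rank1_factor _ _ _ _ (Es (inord k)) Q (eq_leq (hEs_rank _)) hBC.
  have hX : X != 0.
    apply: hA_near; rewrite !inordK //; lia.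
  apply: contra hX => /eqP hXQ.
  have -> : X = X *m Es (inord k) by rewrite /X -(mulmxA _ (Es (inord k))) hEs_mul eqxx.
  by rewrite hY hEQ mulmxA hXQ mul0mx.
have main : forall k, (forall j, (j < k)%N -> (j <= d)%N -> M *m Es (inord j) = 0).
  elim=> [|k IH] j hj hjd; first by [].
  have [ljk|ejk] : (j < k)%N \/ j = k by lia.
    exact: IH.
  subst j.
  have hkv : (nat_of_ord (inord k : 'I_d.+1) = k) by rewrite inordK //; lia.
  have := hM k hjd.
  rewrite -mulmxA expand (bigD1 (inord k)) //= big1 ?addr0; last first.
    move=> l hl.
    have hlk : nat_of_ord l != k by apply: contra hl => /eqP hl; apply/eqP/val_inj; rewrite /= hkv.
    have [hlt|hgt] : (l < k)%N \/ (k < l)%N by lia.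
      have -> : l = inord l by rewrite inord_val.
      by rewrite IH ?mul0mx //; lia.
    by rewrite (mulmxA (Es l)) F1 ?mulmx0 //= add0n hgt orbT.
  set Q := Es (inord k) *m A ^+ k *m Es ord0.
  have hQ : Q != 0 by apply: F3.
  have hEQ : Es (inord k) *m Q = Q by rewrite /Q !mulmxA hEs_mul eqxx.
  have hBC : Es (inord k) *m Q != 0 by rewrite hEQ.
  have [Y hY] := @rank1_factor _ _ _ _ (Es (inord k)) Q (eq_leq (hEs_rank _)) hBC.
  rewrite (mulmxA (Es (inord k))) -/Q => hMQ.
  by rewrite hY (mulmxA M (Es (inord k) *m Q) Y) (mulmxA M (Es (inord k)) Q) hMQ mul0mx.
rewrite -[M]mulmx1 -hS mulmx_sumr big1 // => l _.
have hl := ltn_ord l; rewrite -(inord_val l); apply: (main l.+1) => //; lia.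
Qed.

Theorem lemma7p12 (F : fieldType) (d : nat) (hd : (0 < d)%N)
  (Es : 'I_d.+1 -> 'M[F]_d.+1) (A : 'M[F]_d.+1)
  (theta thetas : 'I_d.+1 -> F) (r : 'I_d.+1)
  (hEs_mul : forall i j : 'I_d.+1,
      Es i *m Es j = if i == j then Es i else 0)
  (hEs_rank : forall i : 'I_d.+1, \rank (Es i) = 1%N)
  (hA_far : forall i j : 'I_d.+1,
      ((i.+1 < j) || (j.+1 < i))%N -> Es i *m A *m Es j = 0)
  (hA_near : forall i j : 'I_d.+1,
      ((i.+1 == j) || (j.+1 == i))%N -> Es i *m A *m Es j != 0)
  (htheta_inj : injective theta)
  (htheta_eig : forall i : 'I_d.+1, eigenvalue A (theta i))
  (hr : #|[set j : 'I_d.+1 |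
           Delta_adj (prim_idem A theta) (dual_op Es thetas) r j]| = 1%N) :
  \tr (prim_idem A theta r *m dual_op Es thetas) != thetas ord0.
Proof.
set E := prim_idem A theta.
set As := dual_op Es thetas.
have cyc := @cyclic0 _ _ _ _ hEs_mul hEs_rank hA_far hA_near.
have [v hv] : exists v : 'I_d.+1 -> 'rV[F]_d.+1,
    forall i, v i *m A = theta i *: v i /\ v i != 0.
  apply: (@fin_all_exists _ (fun _ => 'rV[F]_d.+1) (fun i w => w *m A = theta i *: w /\ w != 0)) => i.
  by have /eigenvalueP [w hw1 hw2] := htheta_eig i; exists w.
have uE : forall i j, v i *m E j = (i == j)%:R *: v i.
  move=> i j; rewrite /E /prim_idem (@prod_eig _ _ _ _ _ _ _ _ _ (hv i).1).
  congr (_ *: _); case: eqP => [<-|/eqP nij].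
    apply: big1 => l hl; rewrite mulVf // subr_eq0.
    by apply: contra hl => /eqP /htheta_inj ->.
  by rewrite (bigD1 i) //= subrr mulr0 mul0r.
have vnz : forall i, v i != 0 := fun i => (hv i).2.
have beq := @basis_eq _ _ v E vnz uE.
have sumE : \sum_j E j = 1%:M.
  apply: beq => i; rewrite mulmx1 mulmx_sumr (bigD1 i) //= big1 => [|j hj].
    by rewrite uE eqxx scale1r addr0.
  by rewrite uE eq_sym (negbTE hj) scale0r.
have EE : forall i j, E i *m E j = if i == j then E i else 0.
  move=> i j; apply: beq => k; rewrite mulmxA uE -scalemxAl.
  case: (eqVneq i j) => [<-|nij]; rewrite ?eqxx ?(negbTE nij) ?mulmx0 uE.
    by case: (eqVneq k i) => [->|nki]; rewrite ?eqxx ?(negbTE nki) /= ?mulr1n ?mulr0n ?scale1r ?scale0r ?scaler0.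
  by case: (eqVneq k i) => [->|nki]; rewrite ?eqxx ?(negbTE nki) ?(negbTE nij) /= ?mulr1n ?mulr0n ?scale1r ?scale0r ?scaler0.
have EA : forall i, E i *m A = theta i *: E i.
  move=> i; apply: beq => k; rewrite mulmxA uE -scalemxAl (hv k).1 -scalemxAr uE.
  rewrite !scalerA; case: (eqVneq k i) => [->|nki]; first by rewrite mulrC.
  by rewrite /= mulr0n mul0r mulr0.
have EAk : forall i k, E i *m A ^+ k = theta i ^+ k *: E i.
  move=> i; elim=> [|k IH]; first by rewrite expr0 mulmx1 expr0 scale1r.
  rewrite exprSr -[_ * A]/(A ^+ k *m A) mulmxA IH -scalemxAl EA scalerA -exprSr.
  by [].
have rE : (\rank (E r) <= 1)%N.
  pose K := kermx (E r *m Es ord0).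
  have hK : K *m E r = 0.
    apply: cyc => k _.
    by rewrite -(mulmxA K) EAk -scalemxAr -scalemxAl -mulmxA mulmx_ker scaler0.
  have := mxrankS (introT sub_kermxP hK).
  rewrite !mxrank_ker.
  have := mxrankM_maxr (E r) (Es ord0); rewrite hEs_rank.
  have := rank_leq_col (E r).
  lia.
have [s hs] : exists s, [set j | Delta_adj E As r j] = [set s] by apply/cards1P/eqP.
have adj : forall j, Delta_adj E As r j = (j == s).
  by move=> j; rewrite -in_set1 -hs inE.
have hsr : r != s /\ E r *m As *m E s != 0 by have := adj s; rewrite eqxx => /andP.
have hz : forall j, j != s -> j != r -> E r *m As *m E j = 0.
  move=> j hjs hjr; have := adj j; rewrite (negbTE hjs) /Delta_adj eq_sym hjr /=.
  by move/negbT/negPn/eqP.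
apply/eqP => hc.
set c := thetas ord0.
have hN : E r *m (As - c%:M) = E r *m As *m E s.
  rewrite -[LHS]mulmx1 -sumE mulmx_sumr (bigD1 s) //= big1 ?addr0.
    by rewrite mulmxBr mulmxBl mul_mx_scalar -scalemxAl EE (negbTE hsr.1) scaler0 subr0.
  move=> j hjs; rewrite mulmxBr mulmxBl mul_mx_scalar -scalemxAl EE.
  case: (eqVneq r j) => [<-|nrj].
    by rewrite trace_rank1 // hc subrr.
  by rewrite hz // 1?eq_sym // scaler0 subr0.
have hAs0 : (As - c%:M) *m Es ord0 = 0.
  rewrite mulmxBl mul_scalar_mx /As /dual_op mulmx_suml (bigD1 ord0) //= big1 ?addr0.
    by rewrite -scalemxAl hEs_mul eqxx subrr.
  by move=> j hj; rewrite -scalemxAl hEs_mul (negbTE hj) scaler0.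
have hM0 : E r *m As *m E s *m Es ord0 = 0 by rewrite -hN -mulmxA hAs0 mulmx0.
have : E r *m As *m E s = 0.
  apply: cyc => k _.
  by rewrite -(mulmxA _ (E s)) EAk -scalemxAr -scalemxAl hM0 scaler0.
by move/eqP; rewrite (negbTE hsr.2).
Qed.
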